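(* Let $V$ be a filled sparsity pattern, $X\in\mathbb S^n_V$ positive definite and $Y\in\mathbb S^n_V$. For $t$ in a neighborhood of $0$ let $X+tY=L(t)D(t)L(t)^T$ be the factorization with $L(t)$ unit lower triangular and $D(t)$ positive diagonal, and for each vertex $i$ let $U_i(t)=-\sum_{k\in T_i}D_{kk}(t)L_{I_ik}(t)L_{I_ik}(t)^T$. Write $L=L(0)$, $D=D(0)$ and $L',D',U_i'$ for the derivatives at $t=0$. Then for every $j$, $$\begin{bmatrix}Y_{jj}&Y_{I_j j}^T\\ Y_{I_j j}&0\end{bmatrix}+\sum_{i\in\mathrm{ch}(j)}E_{I_j^+I_i}U_i'E_{I_j^+I_i}^T=\begin{bmatrix}1&0\\ L_{I_j j}&I\end{bmatrix}\begin{bmatrix}D_{jj}'&D_{jj}(L'_{I_j j})^T\\ D_{jj}L'_{I_j j}&U_j'\end{bmatrix}\begin{bmatrix}1&L_{I_j j}^T\\0&I\end{bmatrix}.$$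
   Context: A symmetric sparsity pattern $V$ is a set of pairs $(i,j)$ with $1\le j\le i\le n$ containing all $(i,i)$; it is filled (chordal) if $i>j>k$, $(i,k)\in V$, $(j,k)\in V$ imply $(i,j)\in V$. $\mathbb S^n_V$ is the set of real symmetric $n\times n$ matrices with $X_{ij}=X_{ji}=0$ whenever $i\ge j$ and $(i,j)\notin V$. For each $j$, $I_j=\{i>j:(i,j)\in V\}$, $I_j^+=\{j\}\cup I_j$. Elimination tree: the parent of $j$ is $\min I_j$ if $I_j\neq\emptyset$; $\mathrm{ch}(j)$ is the set of children of $j$ and $T_i$ the set consisting of $i$ and its descendants. It is known that $I_i\subseteq I_j^+$ for $i\in\mathrm{ch}(j)$ and that the Cholesky factor of a positive definite matrix in $\mathbb S^n_V$ has no nonzeros outside $V$. Index sets are sorted increasingly, $I(a)$ being the $a$-th element; for $J\subseteq I$, $E_{IJ}$ is the $|I|\times|J|$ matrix with $(E_{IJ})_{ab}=1$ iff $I(a)=J(b)$, else $0$. $A_{IJ}$ is the submatrix with rows $I$ and columns $J$; $A_{Ij}$ the part of column $j$ with rows in $I$. *)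

(* Defs.v *)
(* Conventions: vertices / matrix indices are 0-based, 0 <= i < n.
   Matrices are functions nat -> nat -> R; only entries with indices in
   range are ever constrained or used. *)
From Stdlib Require Import Reals List Arith Bool.
Import ListNotations.
Open Scope R_scope.

Definition mat := nat -> nat -> R.

Definition rsum (l : list nat) (f : nat -> R) : R :=
  fold_right (fun i acc => f i + acc) 0 l.

Definition sparsity_pattern (n : nat) (V : nat -> nat -> bool) : Prop :=
  (forall i j, V i j = true -> (j <= i < n)%nat) /\
  (forall i, (i < n)%nat -> V i i = true).

Definition filled (n : nat) (V : nat -> nat -> bool) : Prop :=
  forall i j k, (k < j)%nat -> (j < i)%nat ->
    V i k = true -> V j k = true -> V i j = true.

Definition in_SV (n : nat) (V : nat -> nat -> bool) (X : mat) : Prop :=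
  (forall i j, (i < n)%nat -> (j < n)%nat -> X i j = X j i) /\
  (forall i j, (j <= i < n)%nat -> V i j = false -> X i j = 0 /\ X j i = 0).

Definition pos_def (n : nat) (X : mat) : Prop :=
  forall x : nat -> R, (exists i, (i < n)%nat /\ x i <> 0) ->
    rsum (seq 0 n) (fun i => rsum (seq 0 n) (fun j => x i * X i j * x j)) > 0.

(* I_j = { i > j : (i,j) in V }, sorted increasingly *)
Definition Iset (n : nat) (V : nat -> nat -> bool) (j : nat) : list nat :=
  filter (fun i => V i j) (seq (S j) (n - S j)).

Definition Iplus (n : nat) (V : nat -> nat -> bool) (j : nat) : list nat :=
  j :: Iset n V j.

(* elimination tree: parent of j is min I_j (the head of the sorted list) *)
Definition parent (n : nat) (V : nat -> nat -> bool) (j : nat) : option nat :=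
  match Iset n V j with [] => None | p :: _ => Some p end.

Definition is_child (n : nat) (V : nat -> nat -> bool) (j i : nat) : bool :=
  match parent n V i with Some p => Nat.eqb p j | None => false end.

Definition children (n : nat) (V : nat -> nat -> bool) (j : nat) : list nat :=
  filter (is_child n V j) (seq 0 n).

Fixpoint anc_iter (n : nat) (V : nat -> nat -> bool) (k m : nat) : option nat :=
  match m with
  | O => Some k
  | S m' => match anc_iter n V k m' with
            | Some p => parent n V p
            | None => None
            end
  end.

(* k in T_i  iff  k = i or k is a descendant of i *)
Definition inT (n : nat) (V : nat -> nat -> bool) (i k : nat) : bool :=
  existsb (fun m => match anc_iter n V k m with
                    | Some p => Nat.eqb p i
                    | None => false end) (seq 0 (S n)).

Definition Tset (n : nat) (V : nat -> nat -> bool) (i : nat) : list nat :=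
  filter (inT n V i) (seq 0 n).

(* E_{I J} for J subset of I, positions a < |I|, b < |J| *)
Definition Emat (I J : list nat) (a b : nat) : R :=
  if Nat.eqb (nth a I 0%nat) (nth b J 0%nat) then 1 else 0.

(* U_i(t) = - sum_{k in T_i} D_kk(t) L_{I_i k}(t) L_{I_i k}(t)^T,
   an |I_i| x |I_i| matrix indexed by positions in I_i *)
Definition Umat (n : nat) (V : nat -> nat -> bool) (L D : R -> mat)
    (i : nat) (t : R) (a b : nat) : R :=
  - rsum (Tset n V i) (fun k =>
      D t k k * L t (nth a (Iset n V i) 0%nat) k * L t (nth b (Iset n V i) 0%nat) k).

(* The three block matrices of the identity, all indexed by positions
   0 .. |I_j| in I_j^+ (position 0 is j, position a+1 is I_j(a)). *)
Definition Yblock (n : nat) (V : nat -> nat -> bool) (Y : mat) (j a b : nat) : R :=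
  match a, b with
  | O, O => Y j j
  | O, S b' => Y (nth b' (Iset n V j) 0%nat) j
  | S a', O => Y (nth a' (Iset n V j) 0%nat) j
  | S _, S _ => 0
  end.

Definition Lblock (n : nat) (V : nat -> nat -> bool) (L0 : mat) (j a c : nat) : R :=
  match a, c with
  | O, O => 1
  | O, S _ => 0
  | S a', O => L0 (nth a' (Iset n V j) 0%nat) j
  | S a', S c' => if Nat.eqb a' c' then 1 else 0
  end.

Definition Mblock (n : nat) (V : nat -> nat -> bool) (D0 Dp Lp : mat)
    (Upj : nat -> nat -> R) (j c d : nat) : R :=
  match c, d with
  | O, O => Dp j j
  | O, S d' => D0 j j * Lp (nth d' (Iset n V j) 0%nat) j
  | S c', O => D0 j j * Lp (nth c' (Iset n V j) 0%nat) j
  | S c', S d' => Upj c' d'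
  end.

(* Main.v *)
Require Import Defs.
From Stdlib Require Import Reals List Arith Bool Lia Lra.
From Coquelicot Require Import Coquelicot.
Import ListNotations.
Open Scope R_scope.

Lemma rsum_nil f : rsum [] f = 0.
Proof. reflexivity. Qed.
Lemma rsum_cons x l f : rsum (x :: l) f = f x + rsum l f.
Proof. reflexivity. Qed.

Lemma rsum_app l1 l2 f : rsum (l1 ++ l2) f = rsum l1 f + rsum l2 f.
Proof. induction l1; simpl; [lra|]. unfold rsum in *; simpl. rewrite IHl1. lra. Qed.

Lemma rsum_ext l f g : (forall x, In x l -> f x = g x) -> rsum l f = rsum l g.
Proof.
  induction l; intros H; simpl; auto.
  unfold rsum in *; simpl. rewrite H by (left; auto). rewrite IHl; auto.
  intros; apply H; right; auto.
Qed.

Lemma rsum_zero l f : (forall x, In x l -> f x = 0) -> rsum l f = 0.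
Proof.
  intros H. rewrite (rsum_ext l f (fun _ => 0)) by auto.
  induction l; simpl; auto. unfold rsum in *; simpl. rewrite IHl; [lra|].
  intros; apply H; right; auto.
Qed.

Lemma rsum_plus l f g : rsum l (fun x => f x + g x) = rsum l f + rsum l g.
Proof. induction l; simpl; [lra|]. unfold rsum in *; simpl. rewrite IHl. lra. Qed.

Lemma rsum_scal l c f : rsum l (fun x => c * f x) = c * rsum l f.
Proof. induction l; simpl; [lra|]. unfold rsum in *; simpl. rewrite IHl. lra. Qed.

Lemma rsum_scalr l c f : rsum l (fun x => f x * c) = rsum l f * c.
Proof. induction l; simpl; [lra|]. unfold rsum in *; simpl. rewrite IHl. lra. Qed.

Lemma rsum_opp l f : rsum l (fun x => - f x) = - rsum l f.
Proof. induction l; simpl; [lra|]. unfold rsum in *; simpl. rewrite IHl. lra. Qed.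

Lemma rsum_filter (h : nat -> bool) l f :
  rsum (filter h l) f = rsum l (fun x => if h x then f x else 0).
Proof.
  induction l; simpl; auto. destruct (h a); unfold rsum in *; simpl; rewrite IHl; lra.
Qed.

Lemma rsum_swap l1 l2 (f : nat -> nat -> R) :
  rsum l1 (fun x => rsum l2 (fun y => f x y)) = rsum l2 (fun y => rsum l1 (fun x => f x y)).
Proof.
  induction l1; simpl.
  - symmetry; apply rsum_zero; auto.
  - change (rsum l2 (fun y => f a y) + rsum l1 (fun x => rsum l2 (fun y => f x y)) =
            rsum l2 (fun y => f a y + rsum l1 (fun x => f x y))).
    rewrite rsum_plus, IHl1. auto.
Qed.

Lemma rsum_map (h : nat -> nat) l f : rsum (map h l) f = rsum l (fun x => f (h x)).
Proof. induction l; simpl; auto. unfold rsum in *; simpl; rewrite IHl; auto. Qed.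

Lemma rsum_nth l f :
  rsum (seq 0 (length l)) (fun c => f (nth c l 0%nat)) = rsum l f.
Proof.
  induction l; simpl; auto.
  change (f a + rsum (seq 1 (length l)) (fun c => f (nth c (a :: l) 0%nat)) = f a + rsum l f).
  rewrite <- seq_shift, rsum_map. simpl. rewrite IHl. auto.
Qed.

Lemma rsum_delta_in l p g : NoDup l -> In p l ->
  rsum l (fun x => if Nat.eqb p x then g x else 0) = g p.
Proof.
  induction l; intros Hn Hi; [destruct Hi|]. inversion Hn; subst.
  change ((if Nat.eqb p a then g a else 0) + rsum l (fun x => if Nat.eqb p x then g x else 0) = g p).
  destruct Hi as [Ha|Hi].
  - subst a. rewrite Nat.eqb_refl. rewrite rsum_zero; [lra|].
    intros x Hx. destruct (Nat.eqb_spec p x); subst; auto. contradiction.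
  - destruct (Nat.eqb_spec p a); subst; [contradiction|]. rewrite IHl; auto. lra.
Qed.

Lemma rsum_delta_notin l p g : ~ In p l ->
  rsum l (fun x => if Nat.eqb p x then g x else 0) = 0.
Proof.
  intros H; apply rsum_zero. intros x Hx. destruct (Nat.eqb_spec p x); subst; auto. contradiction.
Qed.
Section Comb.
Variable n : nat.
Variable V : nat -> nat -> bool.
Hypothesis HV : sparsity_pattern n V.
Hypothesis Hfill : filled n V.

Lemma Iset_In j p : In p (Iset n V j) <-> (j < p < n)%nat /\ V p j = true.
Proof.
  unfold Iset. rewrite filter_In, in_seq. split; intros [H1 H2]; split; auto; lia.
Qed.

Lemma Iset_NoDup j : NoDup (Iset n V j).
Proof. unfold Iset. apply NoDup_filter, seq_NoDup. Qed.

Lemma filter_seq_head (f : nat -> bool) s l h r :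
  filter f (seq s l) = h :: r -> forall x, In x (filter f (seq s l)) -> (h <= x)%nat.
Proof.
  revert s h r. induction l; intros s h r E x Hx; simpl in *. discriminate.
  destruct (f s) eqn:Fs.
  - inversion E; subst. simpl in Hx. destruct Hx as [<-|Hx]; auto.
    apply filter_In in Hx. destruct Hx as [Hx _]. apply in_seq in Hx. lia.
  - rewrite E in Hx. rewrite <- E in Hx.
    pose proof (IHl (S s) h r E x Hx). auto.
Qed.

Lemma parent_spec k p : parent n V k = Some p ->
  In p (Iset n V k) /\ forall x, In x (Iset n V k) -> (p <= x)%nat.
Proof.
  unfold parent. destruct (Iset n V k) eqn:E; intros H; [discriminate|].
  inversion H; subst. split; [left; auto|].
  intros x Hx. unfold Iset in E. eapply filter_seq_head; eauto. rewrite E. exact Hx.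
Qed.

Lemma parent_lt k p : parent n V k = Some p -> (k < p < n)%nat /\ V p k = true.
Proof. intros H. apply parent_spec in H. apply Iset_In. tauto. Qed.

Lemma parent_exists k p : In p (Iset n V k) -> exists q, parent n V k = Some q.
Proof. unfold parent. destruct (Iset n V k); [intros []|]. eauto. Qed.

Lemma anc_S k m : anc_iter n V k (S m) =
  match parent n V k with Some p => anc_iter n V p m | None => None end.
Proof.
  induction m.
  - simpl. destruct (parent n V k); auto.
  - change (anc_iter n V k (S (S m))) with
      (match anc_iter n V k (S m) with Some p => parent n V p | None => None end).
    rewrite IHm. destruct (parent n V k); auto.
Qed.

Lemma anc_ge k m x : anc_iter n V k m = Some x -> (k + m <= x)%nat.
Proof.
  revert x; induction m; intros x H; simpl in H.
  - inversion H; lia.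
  - destruct (anc_iter n V k m) eqn:E; [|discriminate].
    apply parent_lt in H. specialize (IHm _ eq_refl). lia.
Qed.

Lemma anc_lt k m x : (k < n)%nat -> anc_iter n V k m = Some x -> (x < n)%nat.
Proof.
  intros Hk; revert x; induction m; intros x H; simpl in H.
  - inversion H; lia.
  - destruct (anc_iter n V k m) eqn:E; [|discriminate].
    apply parent_lt in H. lia.
Qed.

Lemma anc_add k m d : anc_iter n V k (m + d) =
  match anc_iter n V k m with Some p => anc_iter n V p d | None => None end.
Proof.
  induction d.
  - rewrite Nat.add_0_r. destruct (anc_iter n V k m); auto.
  - rewrite Nat.add_succ_r. simpl. rewrite IHd. destruct (anc_iter n V k m); auto.
Qed.

Lemma anc_inj k m1 m2 x : anc_iter n V k m1 = Some x -> anc_iter n V k m2 = Some x -> m1 = m2.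
Proof.
  intros H1 H2.
  assert (forall a b, (a < b)%nat -> anc_iter n V k a = Some x -> anc_iter n V k b = Some x -> False).
  { intros a b Hab Ha Hb. replace b with (a + (b - a))%nat in Hb by lia.
    rewrite anc_add, Ha in Hb. apply anc_ge in Hb. lia. }
  destruct (Nat.lt_total m1 m2) as [h|[h|h]]; auto; exfalso; eauto.
Qed.

Lemma inT_iff i k : (k < n)%nat ->
  (inT n V i k = true <-> exists m, anc_iter n V k m = Some i).
Proof.
  intros Hk. unfold inT. rewrite existsb_exists. split.
  - intros [m [_ H]]. exists m. destruct (anc_iter n V k m); [|discriminate].
    apply Nat.eqb_eq in H; subst; auto.
  - intros [m H]. exists m. split.
    + apply in_seq. pose proof (anc_ge _ _ _ H). pose proof (anc_lt _ _ _ Hk H). lia.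
    + rewrite H. apply Nat.eqb_refl.
Qed.

Lemma anc_pattern k m i p : anc_iter n V k m = Some i -> (i < p)%nat -> V p k = true ->
  V p i = true.
Proof.
  revert k; induction m; intros k H Hip Hpk.
  - simpl in H. inversion H; subst; auto.
  - rewrite anc_S in H. destruct (parent n V k) as [k1|] eqn:Ep; [|discriminate].
    pose proof (anc_ge _ _ _ H) as Hge.
    destruct (parent_spec _ _ Ep) as [Hin Hmin].
    apply Iset_In in Hin.
    assert (Hpn := proj1 HV p k Hpk).
    assert (Hp: In p (Iset n V k)) by (apply Iset_In; split; auto; lia).
    specialize (Hmin p Hp).
    apply (IHm k1); auto.
    apply (Hfill p k1 k); try lia; tauto.
Qed.

Lemma pattern_anc d : forall k j, (j - k <= d)%nat -> (k < j)%nat -> V j k = true ->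
  exists m, anc_iter n V k m = Some j.
Proof.
  induction d; intros k j Hd Hkj Hjk; [lia|].
  assert (Hjn := proj1 HV j k Hjk).
  assert (Hin: In j (Iset n V k)) by (apply Iset_In; split; auto; lia).
  destruct (parent_exists _ _ Hin) as [k1 Ep].
  destruct (parent_spec _ _ Ep) as [Hk1 Hmin]. specialize (Hmin j Hin).
  apply Iset_In in Hk1.
  destruct (Nat.eq_dec k1 j) as [->|Hne].
  - exists 1%nat. rewrite anc_S, Ep. reflexivity.
  - destruct (IHd k1 j) as [m Hm]; try lia.
    + apply (Hfill j k1 k); try lia; tauto.
    + exists (S m). rewrite anc_S, Ep. auto.
Qed.

Lemma children_In j i : In i (children n V j) <-> (i < n)%nat /\ parent n V i = Some j.
Proof.
  unfold children. rewrite filter_In, in_seq. unfold is_child.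
  destruct (parent n V i) as [p|]; split; intros [H1 H2]; try discriminate.
  - apply Nat.eqb_eq in H2; subst; split; auto; lia.
  - inversion H2; subst. split; [lia|apply Nat.eqb_refl].
Qed.

Lemma children_NoDup j : NoDup (children n V j).
Proof. unfold children. apply NoDup_filter, seq_NoDup. Qed.

Definition ind (b : bool) : R := if b then 1 else 0.

Lemma inT_decomp j k : (j < n)%nat -> (k < n)%nat ->
  ind (inT n V j k) = ind (Nat.eqb k j) + rsum (children n V j) (fun i => ind (inT n V i k)).
Proof.
  intros Hj Hk.
  destruct (Nat.eqb_spec k j) as [->|Hne].
  - assert (inT n V j j = true) by (apply inT_iff; auto; exists 0%nat; auto).
    rewrite H. rewrite rsum_zero; [unfold ind; lra|].
    intros i Hi. apply children_In in Hi. destruct Hi as [_ Hp]. apply parent_lt in Hp.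
    destruct (inT n V i j) eqn:E; auto. apply inT_iff in E; auto. destruct E as [m Hm].
    apply anc_ge in Hm. lia.
  - destruct (inT n V j k) eqn:E.
    + apply inT_iff in E; auto. destruct E as [m Hm].
      destruct m as [|m]. { simpl in Hm. inversion Hm; congruence. }
      simpl in Hm. destruct (anc_iter n V k m) as [i0|] eqn:Ei0; [|discriminate].
      assert (Hi0: In i0 (children n V j)).
      { apply children_In. split; auto. apply parent_lt in Hm; lia. }
      rewrite (rsum_ext _ _ (fun i => if Nat.eqb i0 i then 1 else 0)).
      * rewrite rsum_delta_in; auto. unfold ind; lra. apply children_NoDup.
      * intros i Hi. destruct (Nat.eqb_spec i0 i).
        -- subst. unfold ind. replace (inT n V i k) with true; auto. symmetry; apply inT_iff; eauto.
        -- unfold ind. destruct (inT n V i k) eqn:E2; auto. apply inT_iff in E2; auto.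
           destruct E2 as [m2 Hm2]. apply children_In in Hi. destruct Hi as [_ Hpi].
           assert (anc_iter n V k (S m2) = Some j) by (simpl; rewrite Hm2; auto).
           assert (anc_iter n V k (S m) = Some j) by (simpl; rewrite Ei0; auto).
           assert (S m2 = S m) by (eapply anc_inj; eauto). inversion H1; subst.
           congruence.
    + rewrite rsum_zero; [unfold ind; lra|].
      intros i Hi. unfold ind. destruct (inT n V i k) eqn:E2; auto.
      apply inT_iff in E2; auto. destruct E2 as [m2 Hm2]. apply children_In in Hi.
      destruct Hi as [_ Hpi].
      assert (anc_iter n V k (S m2) = Some j) by (simpl; rewrite Hm2; auto).
      assert (inT n V j k = true) by (apply inT_iff; eauto). congruence.
Qed.

Lemma Tset_sum j g : (j < n)%nat ->
  rsum (Tset n V j) g = g j + rsum (children n V j) (fun i => rsum (Tset n V i) g).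
Proof.
  intros Hj. unfold Tset. rewrite rsum_filter.
  rewrite (rsum_ext _ (fun x => if inT n V j x then g x else 0)
     (fun x => ind (inT n V j x) * g x)) by (intros; unfold ind; destruct inT; lra).
  rewrite (rsum_ext _ (fun x => ind (inT n V j x) * g x)
     (fun x => ind (Nat.eqb x j) * g x + rsum (children n V j) (fun i => ind (inT n V i x) * g x))).
  2:{ intros x Hx. apply in_seq in Hx. rewrite inT_decomp by lia. rewrite (rsum_scalr _ (g x) (fun i => ind (inT n V i x))). lra. }
  rewrite rsum_plus. f_equal.
  - rewrite (rsum_ext _ _ (fun x => if Nat.eqb j x then g x else 0)).
    + apply rsum_delta_in. apply seq_NoDup. apply in_seq; lia.
    + intros x _. unfold ind. destruct (Nat.eqb_spec x j); destruct (Nat.eqb_spec j x); subst; try lra; congruence.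
  - rewrite rsum_swap. apply rsum_ext. intros i _. rewrite rsum_filter. apply rsum_ext.
    intros x _. unfold ind; destruct inT; lra.
Qed.

Lemma Tset_le i k : (i < n)%nat -> In k (Tset n V i) -> (k <= i)%nat.
Proof.
  intros Hi Hk. unfold Tset in Hk. apply filter_In in Hk. destruct Hk as [Hk Ht].
  apply in_seq in Hk. apply inT_iff in Ht; [|lia]. destruct Ht as [m Hm]. apply anc_ge in Hm. lia.
Qed.

Lemma Tset_pattern i k p : In k (Tset n V i) -> (i < p)%nat -> V p k = true -> V p i = true.
Proof.
  intros Hk. unfold Tset in Hk. apply filter_In in Hk. destruct Hk as [Hk Ht].
  apply in_seq in Hk. apply inT_iff in Ht; [|lia]. destruct Ht as [m Hm]. eapply anc_pattern; eauto.
Qed.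

Lemma pattern_Tset j k : (k < j)%nat -> V j k = true -> In k (Tset n V j).
Proof.
  intros H1 H2. assert (Hjn := proj1 HV j k H2).
  unfold Tset. apply filter_In. split. apply in_seq; lia.
  apply inT_iff; [lia|]. eapply (pattern_anc (j - k)); eauto.
Qed.

End Comb.
Section PerT.
Variable n : nat.
Variable V : nat -> nat -> bool.
Hypothesis HV : sparsity_pattern n V.
Hypothesis Hfill : filled n V.
Variable Z : mat.
Variables LL DD : R -> mat.
Variable t : R.
Hypothesis HZsym : forall i j, (i < n)%nat -> (j < n)%nat -> Z i j = Z j i.
Hypothesis HZpat : forall i j, (j <= i < n)%nat -> V i j = false -> Z i j = 0.
Hypothesis Hf : forall i j, (i < n)%nat -> (j < n)%nat ->
  Z i j = rsum (seq 0 n) (fun k => LL t i k * DD t k k * LL t j k).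
Hypothesis HL1 : forall i, (i < n)%nat -> LL t i i = 1.
Hypothesis HLu : forall i j, (i < j < n)%nat -> LL t i j = 0.
Hypothesis HDp : forall i, (i < n)%nat -> DD t i i > 0.

Lemma factor_split i k : (k <= i < n)%nat ->
  Z i k = rsum (seq 0 k) (fun m => LL t i m * DD t m m * LL t k m) + LL t i k * DD t k k.
Proof.
  intros H. rewrite Hf by lia.
  replace n with (k + (1 + (n - k - 1)))%nat at 1 by lia.
  rewrite seq_app, seq_app, rsum_app, rsum_app. simpl.
  rewrite (rsum_zero (seq (k + 1) _)).
  - rewrite HL1 by lia. lra.
  - intros x Hx. apply in_seq in Hx. rewrite (HLu k x) by lia. lra.
Qed.

Lemma L_sparse : forall k i, (k < i < n)%nat -> V i k = false -> LL t i k = 0.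
Proof.
  intros k; induction k as [k IH] using lt_wf_ind; intros i Hki Hv.
  pose proof (factor_split i k ltac:(lia)) as E.
  rewrite HZpat in E by (auto; lia).
  rewrite rsum_zero in E.
  - assert (LL t i k * DD t k k = 0) by lra. pose proof (HDp k ltac:(lia)).
    apply Rmult_integral in H. destruct H; auto. lra.
  - intros m Hm. apply in_seq in Hm.
    destruct (V i m) eqn:Vim.
    + destruct (V k m) eqn:Vkm.
      * assert (V i k = true) by (apply (Hfill i k m); auto; lia). congruence.
      * rewrite (IH m ltac:(lia) k) by (auto; lia). lra.
    + rewrite (IH m ltac:(lia) i) by (auto; lia). lra.
Qed.

Lemma Z_T j p : (j <= p < n)%nat ->
  Z p j = rsum (Tset n V j) (fun k => DD t k k * LL t j k * LL t p k).
Proof.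
  intros H. rewrite Hf by lia. unfold Tset. rewrite rsum_filter. apply rsum_ext.
  intros k Hk. apply in_seq in Hk.
  destruct (inT n V j k) eqn:E; [lra|].
  assert (LL t j k = 0).
  { destruct (Nat.lt_total j k) as [h|[h|h]].
    - apply HLu; lia.
    - subst. exfalso. assert (inT n V k k = true) by (apply inT_iff; auto; try lia; exists 0%nat; auto).
      congruence.
    - destruct (V j k) eqn:Vjk.
      + exfalso. pose proof (pattern_Tset n V HV Hfill j k h Vjk) as HT.
        unfold Tset in HT. apply filter_In in HT. destruct HT; congruence.
      + apply L_sparse; auto; lia. }
  rewrite H0. lra.
Qed.

Lemma W_zero j i p k : (i < n)%nat -> parent n V i = Some j -> (j <= p < n)%nat ->
  ~ In p (Iset n V i) -> In k (Tset n V i) -> LL t p k = 0.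
Proof.
  intros Hi Hp Hjp Hnot Hk. apply parent_lt in Hp; auto.
  pose proof (Tset_le n V i k Hi Hk).
  destruct (V p k) eqn:Vpk.
  - exfalso. apply Hnot. apply Iset_In. split; [lia|]. eapply Tset_pattern; eauto. lia.
  - apply L_sparse; auto; lia.
Qed.

Definition Wm i x y := - rsum (Tset n V i) (fun k => DD t k k * LL t x k * LL t y k).

Lemma child_sum j i a b : (i < n)%nat -> parent n V i = Some j ->
  (a < length (Iplus n V j))%nat -> (b < length (Iplus n V j))%nat ->
  rsum (seq 0 (length (Iset n V i))) (fun c =>
    rsum (seq 0 (length (Iset n V i))) (fun d =>
      Emat (Iplus n V j) (Iset n V i) a c * Umat n V LL DD i t c d
      * Emat (Iplus n V j) (Iset n V i) b d))
  = Wm i (nth a (Iplus n V j) 0%nat) (nth b (Iplus n V j) 0%nat).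
Proof.
  intros Hi Hpar Ha Hb.
  set (p := nth a (Iplus n V j) 0%nat). set (q := nth b (Iplus n V j) 0%nat).
  assert (Hpr: forall a, (a < length (Iplus n V j))%nat -> (j <= nth a (Iplus n V j) 0%nat < n)%nat).
  { intros a0 Ha0. destruct a0; simpl. apply parent_lt in Hpar; auto. lia.
    simpl in Ha0. assert (In (nth a0 (Iset n V j) 0%nat) (Iset n V j)) by (apply nth_In; lia).
    apply Iset_In in H. lia. }
  pose proof (Hpr a Ha) as Hp. pose proof (Hpr b Hb) as Hq. fold p in Hp. fold q in Hq.
  transitivity (rsum (Iset n V i) (fun x => if Nat.eqb p x then
     rsum (Iset n V i) (fun y => if Nat.eqb q y then Wm i x y else 0) else 0)).
  { rewrite <- (rsum_nth (Iset n V i) (fun x => if Nat.eqb p x then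
     rsum (Iset n V i) (fun y => if Nat.eqb q y then Wm i x y else 0) else 0)).
    apply rsum_ext; intros c _. destruct (Nat.eqb p (nth c (Iset n V i) 0%nat)) eqn:E.
    - rewrite <- (rsum_nth (Iset n V i) (fun y => if Nat.eqb q y then Wm i (nth c (Iset n V i) 0%nat) y else 0)).
      apply rsum_ext; intros d _. unfold Emat, Umat, Wm. fold p q. rewrite E.
      destruct (Nat.eqb q _); lra.
    - apply rsum_zero. intros d _. unfold Emat. fold p. rewrite E. lra. }
  assert (Wz: ~ In p (Iset n V i) \/ ~ In q (Iset n V i) -> Wm i p q = 0).
  { intros Hn. unfold Wm. rewrite rsum_zero; [lra|]. intros k Hk. destruct Hn as [Hn|Hn].
    - rewrite (W_zero j i p k) by auto. lra.
    - rewrite (W_zero j i q k) by auto. lra. }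
  destruct (in_dec Nat.eq_dec p (Iset n V i)) as [Hpi|Hpi].
  - rewrite rsum_delta_in; auto using Iset_NoDup.
    destruct (in_dec Nat.eq_dec q (Iset n V i)) as [Hqi|Hqi].
    + rewrite rsum_delta_in; auto using Iset_NoDup.
    + rewrite rsum_delta_notin; auto. rewrite Wz; auto.
  - rewrite rsum_delta_notin; auto. rewrite Wz; auto.
Qed.

Definition Lc j a := match a with O => 1 | S a' => LL t (nth a' (Iset n V j) 0%nat) j end.

Lemma frontal j a b : (j < n)%nat ->
  (a < length (Iplus n V j))%nat -> (b < length (Iplus n V j))%nat ->
  Yblock n V Z j a b + rsum (children n V j) (fun i =>
    rsum (seq 0 (length (Iset n V i))) (fun c =>
    rsum (seq 0 (length (Iset n V i))) (fun d =>
      Emat (Iplus n V j) (Iset n V i) a c * Umat n V LL DD i t c d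
      * Emat (Iplus n V j) (Iset n V i) b d)))
  = Lc j a * Lc j b * DD t j j +
    match a, b with S a', S b' => Umat n V LL DD j t a' b' | _, _ => 0 end.
Proof.
  intros Hj Ha Hb.
  rewrite (rsum_ext _ _ (fun i => Wm i (nth a (Iplus n V j) 0%nat) (nth b (Iplus n V j) 0%nat))).
  2:{ intros i Hi. apply children_In in Hi. destruct Hi. apply child_sum; auto. }
  set (p := nth a (Iplus n V j) 0%nat). set (q := nth b (Iplus n V j) 0%nat).
  assert (Hsum: rsum (children n V j) (fun i => Wm i p q) =
     - (rsum (Tset n V j) (fun k => DD t k k * LL t p k * LL t q k) - DD t j j * LL t p j * LL t q j)).
  { rewrite (Tset_sum n V j _ Hj). unfold Wm. rewrite rsum_opp. lra. }
  rewrite Hsum.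
  assert (HLc: forall a, (a < length (Iplus n V j))%nat -> Lc j a = LL t (nth a (Iplus n V j) 0%nat) j).
  { intros [|a0] _; simpl; auto. rewrite HL1; auto. }
  rewrite (HLc a Ha), (HLc b Hb). fold p q.
  assert (Hpr: forall a', (a' < length (Iset n V j))%nat -> (j < nth a' (Iset n V j) 0%nat < n)%nat).
  { intros a0 Ha0. assert (In (nth a0 (Iset n V j) 0%nat) (Iset n V j)) by (apply nth_In; lia).
    apply Iset_In in H. lia. }
  destruct a as [|a']; destruct b as [|b']; simpl in p, q, Ha, Hb; subst p q; simpl.
  - rewrite (Z_T j j) by lia. rewrite HL1 by auto. lra.
  - pose proof (Hpr b' ltac:(lia)). rewrite (Z_T j) by lia. rewrite HL1 by auto. lra.
  - pose proof (Hpr a' ltac:(lia)). rewrite (Z_T j) by lia. rewrite HL1 by auto.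
    rewrite (rsum_ext _ (fun k => DD t k k * LL t j k * LL t _ k)
       (fun k => DD t k k * LL t (nth a' (Iset n V j) 0%nat) k * LL t j k)) by (intros; lra).
    lra.
  - unfold Umat. lra.
Qed.

End PerT.
Section Der.
Variable x : R.

Lemma dplus (f g : R -> R) df dg : is_derive f x df -> is_derive g x dg ->
  is_derive (fun t => f t + g t) x (df + dg).
Proof. intros; apply (is_derive_plus f g x df dg); auto. Qed.
Lemma dminus (f g : R -> R) df dg : is_derive f x df -> is_derive g x dg ->
  is_derive (fun t => f t - g t) x (df - dg).
Proof. intros; apply (is_derive_minus f g x df dg); auto. Qed.
Lemma dopp (f : R -> R) df : is_derive f x df -> is_derive (fun t => - f t) x (- df).
Proof. intros; apply (is_derive_opp f x df); auto. Qed.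
Lemma dmult (f g : R -> R) df dg : is_derive f x df -> is_derive g x dg ->
  is_derive (fun t => f t * g t) x (df * g x + f x * dg).
Proof. intros; apply (is_derive_mult f g x df dg); auto. intros; apply Rmult_comm. Qed.
Lemma dconst (c : R) : is_derive (fun _ => c) x 0.
Proof. apply (is_derive_const c x). Qed.
Lemma did : is_derive (fun t => t) x 1.
Proof. apply (is_derive_id x). Qed.

Lemma drsum l (f : nat -> R -> R) df : (forall k, In k l -> is_derive (f k) x (df k)) ->
  is_derive (fun t => rsum l (fun k => f k t)) x (rsum l df).
Proof.
  induction l; intros H.
  - change (is_derive (fun _ => 0) x 0). apply dconst.
  - change (is_derive (fun t => f a t + rsum l (fun k => f k t)) x (df a + rsum l df)).
    apply (dplus (f a) (fun t => rsum l (fun k => f k t))).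
    + apply H; left; auto.
    + apply IHl; intros; apply H; right; auto.
Qed.

Lemma exd (f : R -> R) : ex_derive f x -> is_derive f x (Derive f x).
Proof. apply Derive_correct. Qed.

Lemma exd_rsum l (f : nat -> R -> R) : (forall k, In k l -> ex_derive (f k) x) ->
  ex_derive (fun t => rsum l (fun k => f k t)) x.
Proof.
  intros H. eexists. apply drsum. intros k Hk. apply exd. apply H; auto.
Qed.

Lemma exd_plus (f g : R -> R) : ex_derive f x -> ex_derive g x -> ex_derive (fun t => f t + g t) x.
Proof. intros [a Ha] [b Hb]. eexists; apply dplus; eauto. Qed.
Lemma exd_minus (f g : R -> R) : ex_derive f x -> ex_derive g x -> ex_derive (fun t => f t - g t) x.
Proof. intros [a Ha] [b Hb]. eexists; apply dminus; eauto. Qed.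
Lemma exd_mult (f g : R -> R) : ex_derive f x -> ex_derive g x -> ex_derive (fun t => f t * g t) x.
Proof. intros [a Ha] [b Hb]. eexists; apply dmult; eauto. Qed.
Lemma exd_opp (f : R -> R) : ex_derive f x -> ex_derive (fun t => - f t) x.
Proof. intros [a Ha]. eexists; apply dopp; eauto. Qed.
Lemma exd_div (f g : R -> R) : ex_derive f x -> ex_derive g x -> g x <> 0 -> ex_derive (fun t => f t / g t) x.
Proof. intros. apply (ex_derive_div f g x); auto. Qed.
Lemma exd_const (c : R) : ex_derive (fun _ => c) x.
Proof. eexists; apply dconst. Qed.
Lemma exd_lin (a b : R) : ex_derive (fun t => a + t * b) x.
Proof. eexists. apply dplus. apply dconst. apply (dmult (fun t => t) (fun _ => b)). apply did. apply dconst. Qed.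
End Der.

Lemma loc_delta delta : delta > 0 -> locally 0 (fun t => Rabs t < delta).
Proof.
  intros Hd. exists (mkposreal delta Hd). intros y Hy. simpl.
  change (Rabs (y - 0) < delta) in Hy. rewrite Rminus_0_r in Hy. exact Hy.
Qed.
Lemma deq (f : R -> R) x d1 d2 : is_derive f x d1 -> d1 = d2 -> is_derive f x d2.
Proof. intros H <-; auto. Qed.

Lemma dlin (x a b : R) : is_derive (fun t => a + t * b) x b.
Proof.
  eapply deq. apply dplus. apply dconst. apply (dmult x (fun t => t) (fun _ => b)). apply did. apply dconst.
  lra.
Qed.

Lemma dcmc (x c1 c2 : R) (g : R -> R) (dg : R) : is_derive g x dg ->
  is_derive (fun t => c1 * g t * c2) x (c1 * dg * c2).
Proof.
  intros H. eapply deq.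
  apply (dmult x (fun t => c1 * g t) (fun _ => c2)).
  - apply (dmult x (fun _ => c1) g). apply dconst. exact H.
  - apply dconst.
  - lra.
Qed.

Lemma Lblock_collapse n V L0 j a (h : nat -> R) : (a < S (length (Iset n V j)))%nat ->
  rsum (seq 0 (S (length (Iset n V j)))) (fun c => Lblock n V L0 j a c * h c)
  = Lblock n V L0 j a 0 * h 0%nat + match a with O => 0 | S _ => h a end.
Proof.
  intros Ha. change (seq 0 (S (length (Iset n V j)))) with (0%nat :: seq 1 (length (Iset n V j))).
  rewrite <- seq_shift.
  change (Lblock n V L0 j a 0 * h 0%nat + rsum (map S (seq 0 (length (Iset n V j))))
      (fun c => Lblock n V L0 j a c * h c) =
      Lblock n V L0 j a 0 * h 0%nat + match a with O => 0 | S _ => h a end).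
  f_equal. rewrite rsum_map. destruct a as [|a'].
  - apply rsum_zero. intros; simpl; lra.
  - rewrite (rsum_ext _ _ (fun c => if Nat.eqb a' c then h (S c) else 0)).
    + apply (rsum_delta_in _ a' (fun c => h (S c))). apply seq_NoDup. apply in_seq. lia.
    + intros c _. simpl. destruct (Nat.eqb a' c); lra.
Qed.

Section Main.
Variable n : nat.
Variable V : nat -> nat -> bool.
Variables X Y : mat.
Variables L D : R -> mat.
Variable delta : R.
Hypothesis HV : sparsity_pattern n V.
Hypothesis Hfill : filled n V.
Hypothesis HX : in_SV n V X.
Hypothesis HY : in_SV n V Y.
Hypothesis Hdelta : delta > 0.
Hypothesis Hft : forall t, Rabs t < delta ->
     (forall i j, (i < n)%nat -> (j < n)%nat ->
        X i j + t * Y i j = rsum (seq 0 n) (fun k => L t i k * D t k k * L t j k)) /\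
     (forall i, (i < n)%nat -> L t i i = 1) /\
     (forall i j, (i < j < n)%nat -> L t i j = 0) /\
     (forall i j, (i < n)%nat -> (j < n)%nat -> i <> j -> D t i j = 0) /\
     (forall i, (i < n)%nat -> D t i i > 0).

Lemma locd (P : R -> Prop) : (forall t, Rabs t < delta -> P t) -> locally 0 P.
Proof. intros H. eapply filter_imp; [|apply (loc_delta delta Hdelta)]. auto. Qed.

Lemma Z_pat t : forall i j, (j <= i < n)%nat -> V i j = false -> X i j + t * Y i j = 0.
Proof.
  intros i j H Hv. destruct HX as [_ HX2]. destruct HY as [_ HY2].
  rewrite (proj1 (HX2 i j H Hv)), (proj1 (HY2 i j H Hv)). ring.
Qed.

Lemma R0abs : Rabs 0 < delta.
Proof. rewrite Rabs_R0. lra. Qed.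

Lemma deriv_LD : forall k, (k < n)%nat ->
  (forall i, (i < n)%nat -> ex_derive (fun t => L t i k) 0) /\ ex_derive (fun t => D t k k) 0.
Proof.
  intros k; induction k as [k IH] using lt_wf_ind; intros Hk.
  assert (HS : forall i, (i < n)%nat ->
     ex_derive (fun t => rsum (seq 0 k) (fun m => L t i m * D t m m * L t k m)) 0).
  { intros i Hi. apply (exd_rsum 0 (seq 0 k) (fun m t => L t i m * D t m m * L t k m)).
    intros m Hm. apply in_seq in Hm. destruct (IH m ltac:(lia) ltac:(lia)) as [IL ID].
    apply (exd_mult 0 (fun t => L t i m * D t m m) (fun t => L t k m)); auto.
    apply (exd_mult 0 (fun t => L t i m) (fun t => D t m m)); auto. }
  assert (HDk : ex_derive (fun t => D t k k) 0).
  { apply (ex_derive_ext_loc (fun t => (X k k + t * Y k k) -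
        rsum (seq 0 k) (fun m => L t k m * D t m m * L t k m))).
    - apply locd. intros t Ht. destruct (Hft t Ht) as (H1 & H2 & H3 & H4 & H5).
      rewrite (factor_split n (fun i j => X i j + t * Y i j) L D t H1 H2 H3 k k) by lia.
      rewrite H2 by auto. lra.
    - apply exd_minus. apply exd_lin. apply HS; auto. }
  split; auto.
  intros i Hi. destruct (Nat.lt_total k i) as [h|[h|h]].
  - apply (ex_derive_ext_loc (fun t => ((X i k + t * Y i k) -
        rsum (seq 0 k) (fun m => L t i m * D t m m * L t k m)) / D t k k)).
    + apply locd. intros t Ht. destruct (Hft t Ht) as (H1 & H2 & H3 & H4 & H5).
      rewrite (factor_split n (fun i j => X i j + t * Y i j) L D t H1 H2 H3 i k) by lia.
      pose proof (H5 k Hk). match goal with |- ?a = ?b => change (@eq R a b) end. field. lra.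
    + apply exd_div. apply exd_minus. apply exd_lin. apply HS; auto. auto.
      destruct (Hft 0 R0abs) as (_ & _ & _ & _ & H5). pose proof (H5 k Hk). lra.
  - subst. apply (ex_derive_ext_loc (fun _ => 1)).
    + apply locd. intros t Ht. destruct (Hft t Ht) as (H1 & H2 & H3 & H4 & H5). symmetry; auto.
    + apply exd_const.
  - apply (ex_derive_ext_loc (fun _ => 0)).
    + apply locd. intros t Ht. destruct (Hft t Ht) as (H1 & H2 & H3 & H4 & H5). symmetry; apply H3; lia.
    + apply exd_const.
Qed.

Lemma exL i j : (i < n)%nat -> (j < n)%nat -> ex_derive (fun t => L t i j) 0.
Proof. intros. apply (deriv_LD j); auto. Qed.

Lemma exD i j : (i < n)%nat -> (j < n)%nat -> ex_derive (fun t => D t i j) 0.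
Proof.
  intros. destruct (Nat.eq_dec i j).
  - subst. apply (deriv_LD j); auto.
  - apply (ex_derive_ext_loc (fun _ => 0)).
    + apply locd. intros t Ht. destruct (Hft t Ht) as (H1 & H2 & H3 & H4 & H5). symmetry; apply H4; auto.
    + apply exd_const.
Qed.

Lemma nth_Iset_lt i a : (a < length (Iset n V i))%nat -> (nth a (Iset n V i) 0%nat < n)%nat.
Proof.
  intros Ha. assert (In (nth a (Iset n V i) 0%nat) (Iset n V i)) by (apply nth_In; auto).
  apply Iset_In in H. lia.
Qed.

Lemma exU i a b : (i < n)%nat -> (a < length (Iset n V i))%nat -> (b < length (Iset n V i))%nat ->
  ex_derive (fun t => Umat n V L D i t a b) 0.
Proof.
  intros Hi Ha Hb. unfold Umat.
  apply (exd_opp 0 (fun t => rsum (Tset n V i) (fun k =>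
      D t k k * L t (nth a (Iset n V i) 0%nat) k * L t (nth b (Iset n V i) 0%nat) k))).
  apply (exd_rsum 0 (Tset n V i) (fun k t =>
      D t k k * L t (nth a (Iset n V i) 0%nat) k * L t (nth b (Iset n V i) 0%nat) k)).
  intros k Hk. unfold Tset in Hk. apply filter_In in Hk. destruct Hk as [Hk _]. apply in_seq in Hk.
  pose proof (nth_Iset_lt i a Ha). pose proof (nth_Iset_lt i b Hb).
  apply (exd_mult 0 (fun t => D t k k * L t (nth a (Iset n V i) 0%nat) k)
           (fun t => L t (nth b (Iset n V i) 0%nat) k)).
  apply (exd_mult 0 (fun t => D t k k) (fun t => L t (nth a (Iset n V i) 0%nat) k)).
  apply exD; lia. apply exL; lia. apply exL; lia.
Qed.


Definition Lcp j a := match a with O => 0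
  | S a' => Derive (fun t => L t (nth a' (Iset n V j) 0%nat) j) 0 end.

Lemma dLc j a : (j < n)%nat -> (a < length (Iplus n V j))%nat ->
  is_derive (fun t => Lc n V L t j a) 0 (Lcp j a).
Proof.
  intros Hj Ha. destruct a as [|a'].
  - change (is_derive (fun _ : R => 1) 0 0). apply dconst.
  - simpl in Ha.
    change (is_derive (fun t => L t (nth a' (Iset n V j) 0%nat) j) 0
      (Derive (fun t => L t (nth a' (Iset n V j) 0%nat) j) 0)). apply exd. apply exL; auto. apply nth_Iset_lt; lia.
Qed.

Lemma main_aux :
  exists (Lp Dp : mat) (Up : nat -> nat -> nat -> R),
    (forall i j, (i < n)%nat -> (j < n)%nat ->
       derivable_pt_lim (fun t => L t i j) 0 (Lp i j)) /\
    (forall i j, (i < n)%nat -> (j < n)%nat ->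
       derivable_pt_lim (fun t => D t i j) 0 (Dp i j)) /\
    (forall i a b, (i < n)%nat -> (a < length (Iset n V i))%nat ->
       (b < length (Iset n V i))%nat ->
       derivable_pt_lim (fun t => Umat n V L D i t a b) 0 (Up i a b)) /\
    (forall j, (j < n)%nat ->
     forall a b, (a < length (Iplus n V j))%nat -> (b < length (Iplus n V j))%nat ->
       Yblock n V Y j a b
       + rsum (children n V j) (fun i =>
           rsum (seq 0 (length (Iset n V i))) (fun c =>
             rsum (seq 0 (length (Iset n V i))) (fun d =>
               Emat (Iplus n V j) (Iset n V i) a c * Up i c d
               * Emat (Iplus n V j) (Iset n V i) b d)))
       = rsum (seq 0 (length (Iplus n V j))) (fun c =>
           rsum (seq 0 (length (Iplus n V j))) (fun d =>
             Lblock n V (L 0) j a c * Mblock n V (D 0) Dp Lp (Up j) j c d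
             * Lblock n V (L 0) j b d))).
Proof.
  set (Lp := fun i j => Derive (fun t => L t i j) 0).
  set (Dp := fun i j => Derive (fun t => D t i j) 0).
  set (Up := fun i a b => Derive (fun t => Umat n V L D i t a b) 0).
  exists Lp, Dp, Up.
  split; [|split; [|split]].
  - intros i j Hi Hj. apply is_derive_Reals. apply exd. apply exL; auto.
  - intros i j Hi Hj. apply is_derive_Reals. apply exd. apply exD; auto.
  - intros i a b Hi Ha Hb. apply is_derive_Reals. apply exd. apply exU; auto.
  - intros j Hj a b Ha Hb.
    set (F := fun t => Yblock n V (fun i k => X i k + t * Y i k) j a b
       + rsum (children n V j) (fun i =>
           rsum (seq 0 (length (Iset n V i))) (fun c =>
             rsum (seq 0 (length (Iset n V i))) (fun d =>
               Emat (Iplus n V j) (Iset n V i) a c * Umat n V L D i t c d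
               * Emat (Iplus n V j) (Iset n V i) b d)))).
    set (G := fun t => Lc n V L t j a * Lc n V L t j b * D t j j +
       match a, b with S a', S b' => Umat n V L D j t a' b' | _, _ => 0 end).
    assert (HF : is_derive F 0 (Yblock n V Y j a b
       + rsum (children n V j) (fun i =>
           rsum (seq 0 (length (Iset n V i))) (fun c =>
             rsum (seq 0 (length (Iset n V i))) (fun d =>
               Emat (Iplus n V j) (Iset n V i) a c * Up i c d
               * Emat (Iplus n V j) (Iset n V i) b d))))).
    { unfold F. apply dplus.
      - destruct a as [|a']; destruct b as [|b']; cbv beta iota delta [Yblock].
        + apply dlin.
        + apply dlin.
        + apply dlin.
        + change (is_derive (fun _ : R => 0) 0 0). apply dconst.
      - apply drsum. intros i Hi. apply children_In in Hi. destruct Hi as [Hi _].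
        apply drsum. intros c Hc. apply in_seq in Hc.
        apply drsum. intros d Hd. apply in_seq in Hd.
        apply dcmc. unfold Up. apply exd. apply exU; auto; lia. }
    set (RHSc := (Lcp j a * Lc n V L 0 j b + Lc n V L 0 j a * Lcp j b) * D 0 j j
        + Lc n V L 0 j a * Lc n V L 0 j b * Dp j j
        + match a, b with S a', S b' => Up j a' b' | _, _ => 0 end).
    assert (HG : is_derive G 0 RHSc).
    { unfold G, RHSc. apply dplus.
      - apply (dmult 0 (fun t => Lc n V L t j a * Lc n V L t j b) (fun t => D t j j)).
        + apply (dmult 0 (fun t => Lc n V L t j a) (fun t => Lc n V L t j b)); apply dLc; auto.
        + apply exd. apply exD; auto.
      - destruct a as [|a']; destruct b as [|b'];
          try (change (is_derive (fun _ : R => 0) 0 0); apply dconst).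
        simpl in Ha, Hb.
        change (is_derive (fun t => Umat n V L D j t a' b') 0 (Up j a' b')).
        apply exd. apply exU; auto; lia. }
    assert (Hloc : locally 0 (fun t => G t = F t)).
    { apply locd. intros t Ht. destruct (Hft t Ht) as (H1 & H2 & H3 & H4 & H5).
      unfold G, F. symmetry.
      apply (frontal n V HV Hfill (fun i k => X i k + t * Y i k) L D t (Z_pat t) H1 H2 H3 H5 j a b Hj Ha Hb). }
    pose proof (is_derive_ext_loc G F 0 RHSc Hloc HG) as HF2.
    apply is_derive_unique in HF. apply is_derive_unique in HF2.
    rewrite <- HF, HF2. unfold RHSc.
    simpl length. simpl length in Ha, Hb.
    rewrite (rsum_ext _ _ (fun c => Lblock n V (L 0) j a c *
        rsum (seq 0 (S (length (Iset n V j)))) (fun d => Lblock n V (L 0) j b d *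
           Mblock n V (D 0) Dp Lp (Up j) j c d))).
    2:{ intros c _. rewrite <- rsum_scal. apply rsum_ext. intros d _. lra. }
    rewrite (rsum_ext _ _ (fun c => Lblock n V (L 0) j a c *
        (Lblock n V (L 0) j b 0 * Mblock n V (D 0) Dp Lp (Up j) j c 0%nat +
         match b with O => 0 | S _ => Mblock n V (D 0) Dp Lp (Up j) j c b end))).
    2:{ intros c _. rewrite Lblock_collapse; auto. }
    rewrite Lblock_collapse; auto.
    destruct a as [|a']; destruct b as [|b']; simpl; unfold Lcp, Lp, Dp; lra.
Qed.
End Main.

Theorem mainTheorem5 (n : nat) (V : nat -> nat -> bool) (X Y : mat)
  (L D : R -> mat)
  (HV : sparsity_pattern n V) (Hfill : filled n V)
  (HX : in_SV n V X) (HXpd : pos_def n X) (HY : in_SV n V Y)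
  (Hfact : exists delta, delta > 0 /\ forall t, Rabs t < delta ->
     (forall i j, (i < n)%nat -> (j < n)%nat ->
        X i j + t * Y i j = rsum (seq 0 n) (fun k => L t i k * D t k k * L t j k)) /\
     (forall i, (i < n)%nat -> L t i i = 1) /\
     (forall i j, (i < j < n)%nat -> L t i j = 0) /\
     (forall i j, (i < n)%nat -> (j < n)%nat -> i <> j -> D t i j = 0) /\
     (forall i, (i < n)%nat -> D t i i > 0)) :
  exists (Lp Dp : mat) (Up : nat -> nat -> nat -> R),
    (forall i j, (i < n)%nat -> (j < n)%nat ->
       derivable_pt_lim (fun t => L t i j) 0 (Lp i j)) /\
    (forall i j, (i < n)%nat -> (j < n)%nat ->
       derivable_pt_lim (fun t => D t i j) 0 (Dp i j)) /\
    (forall i a b, (i < n)%nat -> (a < length (Iset n V i))%nat ->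
       (b < length (Iset n V i))%nat ->
       derivable_pt_lim (fun t => Umat n V L D i t a b) 0 (Up i a b)) /\
    (forall j, (j < n)%nat ->
     forall a b, (a < length (Iplus n V j))%nat -> (b < length (Iplus n V j))%nat ->
       Yblock n V Y j a b
       + rsum (children n V j) (fun i =>
           rsum (seq 0 (length (Iset n V i))) (fun c =>
             rsum (seq 0 (length (Iset n V i))) (fun d =>
               Emat (Iplus n V j) (Iset n V i) a c * Up i c d
               * Emat (Iplus n V j) (Iset n V i) b d)))
       = rsum (seq 0 (length (Iplus n V j))) (fun c =>
           rsum (seq 0 (length (Iplus n V j))) (fun d =>
             Lblock n V (L 0) j a c * Mblock n V (D 0) Dp Lp (Up j) j c d
             * Lblock n V (L 0) j b d))).
Proof.
  destruct Hfact as [delta [Hd Hft]].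
  exact (main_aux n V X Y L D delta HV Hfill HX HY Hd Hft).
Qed.
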